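(* Let $G=(V,E)$ and $H=(U,F)$ be finite simple graphs. If $G$ and $H$ are isomorphic, then the uniqueness tree algorithm (described in the context) applied to $G$ and $H$ outputs ''$G\cong H$''.
   Context: A simple graph is a finite, unweighted, undirected graph with no loops or multiple edges. $G\cong H$ means there is a bijection $f:V\to U$ such that for all $u,v\in V$, $f(u)f(v)\in F$ if and only if $uv\in E$. Let $n$ denote the number of vertices. The uniqueness tree algorithm consists of two stages. Tree generation: for each graph and each vertex $v$ of it, build a rooted tree $T(v)$ whose nodes are labelled by vertices of the graph, level by level. Level $0$ consists of the root, labelled $v$. A node on the current level is unique if its label occurs exactly once among the labels on that level. Each non-unique node becomes a leaf; each unique node labelled $u$ receives one child labelled $w$ for each neighbour $w$ of $u$ in the graph; these children form the next level. This is repeated while some node on the current level is unique and the height of $T(v)$ is less than $n$. Tree comparison: initially no vertex is mapped. For each unmapped $v\in V$ and, in turn, each unmapped $u\in U$, declare $v$ and $u$ equivalent unless one of the following holds: the heights of $T(v)$ and $T(u)$ differ; for some level, the numbers of nodes on that level of $T(v)$ and $T(u)$ differ; for some level and some $i\in\{1,\dots,n-1\}$, the number of nodes on that level having exactly $i$ children differs between $T(v)$ and $T(u)$. If $v$ and $u$ are equivalent, mark both as mapped. At the end, output ''$G\cong H$'' if all vertices of $V$ and $U$ have been mapped, and ''$G\not\cong H$'' otherwise. *)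

(* Defs.v *)
From mathcomp Require Import all_boot.
Set Implicit Arguments. Unset Strict Implicit. Unset Printing Implicit Defensive.

Definition simple_graph (V : finType) (e : rel V) : Prop :=
  symmetric e /\ irreflexive e.

Definition graph_iso (V U : finType) (eV : rel V) (eU : rel U) : Prop :=
  exists f : V -> U, bijective f /\ forall x y, eU (f x) (f y) = eV x y.

Section UniquenessTree.
Variables (V : finType) (e : rel V).

Definition neighbours (u : V) : seq V := [seq w <- enum V | e u w].

(* a node with label u on a level (list of labels) is unique iff
   u occurs exactly once among the labels of that level *)
Definition uniqueb (L : seq V) (u : V) : bool := count_mem u L == 1.

Definition next_level (L : seq V) : seq V :=
  flatten [seq (if uniqueb L u then neighbours u else [::]) | u <- L].

(* generation of the levels; k = remaining allowed height increase *)
Fixpoint gen_levels (k : nat) (L : seq V) : seq (seq V) :=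
  match k with
  | 0 => [:: L]
  | k'.+1 => if has (uniqueb L) L then L :: gen_levels k' (next_level L)
             else [:: L]
  end.

Definition tree_levels (v : V) : seq (seq V) := gen_levels #|V| [:: v].

(* height of T(v) = maximal depth of a node (an empty last level carries no node) *)
Definition tree_height (v : V) : nat :=
  (size [seq L <- tree_levels v | L != [::]]).-1.

Definition level_of (v : V) (l : nat) : seq V := nth [::] (tree_levels v) l.

Definition level_size (v : V) (l : nat) : nat := size (level_of v l).

(* number of children of a node labelled u on level l: nodes on the last
   generated level are leaves; otherwise unique nodes get deg(u) children *)
Definition nchildren (v : V) (l : nat) (u : V) : nat :=
  if (l.+1 < size (tree_levels v)) && uniqueb (level_of v l) u
  then size (neighbours u) else 0.

Definition count_children (v : V) (l i : nat) : nat :=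
  count (fun u => nchildren v l u == i) (level_of v l).

End UniquenessTree.

(* Levels beyond both trees are empty, so it
   suffices to range over levels below the larger number of levels. *)
Definition equivalent (V U : finType) (eV : rel V) (eU : rel U) (n : nat)
    (v : V) (u : U) : bool :=
  let N := maxn (size (tree_levels eV v)) (size (tree_levels eU u)) in
  [&& tree_height eV v == tree_height eU u,
      all (fun l => level_size eV v l == level_size eU u l) (iota 0 N)
    & all (fun l => all (fun i => count_children eV v l i == count_children eU u l i)
                        (iota 1 n.-1)) (iota 0 N)].

(* State: (list of still-unmapped vertices of U, in order; number of
   vertices of V left unmapped). *)
Definition compare_step (V U : finType) (eV : rel V) (eU : rel U)
    (st : seq U * nat) (v : V) : seq U * nat :=
  let: (remU, bad) := st in
  match [seq u <- remU | equivalent eV eU #|V| v u] with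
  | u :: _ => (rem u remU, bad)
  | [::] => (remU, bad.+1)
  end.

(* output: true means "G ≅ H" (all vertices of V and U mapped) *)
Definition uniqueness_tree_algorithm (V U : finType) (eV : rel V) (eU : rel U)
    (sV : seq V) (sU : seq U) : bool :=
  let: (remU, bad) := foldl (compare_step eV eU) (sU, 0) sV in
  (bad == 0) && (remU == [::]).

(* Main.v *)
Require Import Defs.
From mathcomp Require Import all_boot.
Set Implicit Arguments. Unset Strict Implicit. Unset Printing Implicit Defensive.

Lemma perm_flatten_map (T S : eqType) (h1 h2 : T -> seq S) s :
  (forall x, perm_eq (h1 x) (h2 x)) ->
  perm_eq (flatten (map h1 s)) (flatten (map h2 s)).
Proof.
move=> H; elim: s => //= x s IH; exact: perm_cat.
Qed.

Section Iso.
Variables (V U : finType) (eV : rel V) (eU : rel U) (f : V -> U) (g : U -> V).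
Hypotheses (fK : cancel f g) (gK : cancel g f)
  (hf : forall x y, eU (f x) (f y) = eV x y).

Let finj : injective f := can_inj fK.

Lemma nb_perm u : perm_eq (neighbours eU (f u)) (map f (neighbours eV u)).
Proof.
apply: uniq_perm; first exact/filter_uniq/enum_uniq.
  by rewrite (map_inj_uniq finj); exact/filter_uniq/enum_uniq.
move=> w; rewrite -(gK w) (mem_map finj) !mem_filter hf.
by rewrite -!enumT !mem_enum.

Qed.

Lemma uniq_rel L' L : perm_eq L' (map f L) -> forall u,
  uniqueb L' (f u) = uniqueb L u.
Proof.
move=> H u; rewrite /uniqueb (permP H) count_map; congr (_ == _).
by apply: eq_count => x /=; rewrite inj_eq.
Qed.

Lemma next_rel L' L : perm_eq L' (map f L) ->
  perm_eq (next_level eU L') (map f (next_level eV L)).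
Proof.
move=> H; rewrite /next_level map_flatten -map_comp.
apply: perm_trans (perm_flatten (perm_map _ H)) _.
rewrite -map_comp; apply: perm_flatten_map => u /=.
rewrite (uniq_rel H); case: (uniqueb L u) => //; exact: nb_perm.
Qed.

Lemma gen_rel k L' L : perm_eq L' (map f L) ->
  [/\ size (gen_levels eU k L') = size (gen_levels eV k L),
      count (fun X => X != [::]) (gen_levels eU k L') =
      count (fun X => X != [::]) (gen_levels eV k L) &
      forall l, perm_eq (nth [::] (gen_levels eU k L') l)
                        (map f (nth [::] (gen_levels eV k L) l))].
Proof.
elim: k L' L => [|k IH] L' L H /=.
  split=> //.
    by rewrite -!size_eq0 (perm_size H) size_map.
  by case=> //= l; rewrite !nth_nil.
have -> : has (uniqueb L') L' = has (uniqueb L) L.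
  rewrite (perm_has _ H) has_map; apply: eq_has => u /=; exact: uniq_rel.
have Hne : (L' != [::]) = (L != [::]).
  by rewrite -!size_eq0 (perm_size H) size_map.
case: (has (uniqueb L) L) => /=.
  have [h1 h2 h3] := IH _ _ (next_rel H).
  split; [by rewrite h1 | by rewrite h2 Hne | by case].
split=> //; first by rewrite Hne.
by case=> //= l; rewrite !nth_nil.
Qed.

Lemma cardVU : #|V| = #|U|.
Proof. apply: bij_eq_card; exists g => //. Qed.

Lemma tl_rel x :
  [/\ size (tree_levels eU (f x)) = size (tree_levels eV x),
      count (fun X => X != [::]) (tree_levels eU (f x)) =
      count (fun X => X != [::]) (tree_levels eV x) &
      forall l, perm_eq (level_of eU (f x) l) (map f (level_of eV x l))].
Proof. by rewrite /level_of /tree_levels -cardVU; apply: gen_rel. Qed.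

Lemma tsize x : size (tree_levels eU (f x)) = size (tree_levels eV x).
Proof. by case: (tl_rel x). Qed.

Lemma theight x : tree_height eU (f x) = tree_height eV x.
Proof. by rewrite /tree_height !size_filter; case: (tl_rel x) => _ ->. Qed.

Lemma lsize x l : level_size eU (f x) l = level_size eV x l.
Proof. by rewrite /level_size; case: (tl_rel x) => _ _ /(_ l) /perm_size ->; rewrite size_map. Qed.

Lemma nch x l u : nchildren eU (f x) l (f u) = nchildren eV x l u.
Proof.
rewrite /nchildren tsize; case: (tl_rel x) => _ _ /(_ l) H.
rewrite (uniq_rel H); case: (_ && _) => //.
by rewrite (perm_size (nb_perm u)) size_map.
Qed.

Lemma cch x l i : count_children eU (f x) l i = count_children eV x l i.
Proof.
rewrite /count_children; case: (tl_rel x) => _ _ /(_ l) H.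
rewrite (permP H) count_map; apply: eq_count => u /=; by rewrite nch.
Qed.

Lemma equiv_f n v x : equivalent eV eU n v (f x) = equivalent eV eV n v x.
Proof.
rewrite /equivalent tsize theight; congr [&& _, _ & _].
  by apply: eq_all => l /=; rewrite lsize.
by apply: eq_all => l /=; apply: eq_all => i /=; rewrite cch.
Qed.

End Iso.
Section Eqv.
Variables (V : finType) (e : rel V) (n : nat).

Definition P (v x : V) :=
  tree_height e v = tree_height e x /\ forall l, level_size e v l = level_size e x l /\
   forall i, i \in iota 1 n.-1 -> count_children e v l i = count_children e x l i.

Lemma beyond v l : size (tree_levels e v) <= l ->
  level_size e v l = 0 /\ forall i, count_children e v l i = 0.
Proof. by move=> H; rewrite /level_size /count_children /level_of nth_default. Qed.

Lemma Rext v x : equivalent e e n v x -> P v x.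
Proof.
case/and3P => /eqP Hh /allP Hs /allP Hc; split=> // l.
set N := maxn _ _ in Hs Hc.
case: (ltnP l N) => Hl.
  have Hm : l \in iota 0 N by rewrite mem_iota.
  split; first exact/eqP/Hs.
  by move=> i Hi; move/allP: (Hc l Hm) => /(_ i Hi) /eqP.
have [h1 h2] := beyond (leq_trans (leq_maxl _ _) Hl).
have [h3 h4] := beyond (leq_trans (leq_maxr _ _) Hl).
by rewrite h1 h3; split=> // i _; rewrite h2 h4.
Qed.

Lemma Rmk v x : P v x -> equivalent e e n v x.
Proof.
case=> Hh H; apply/and3P; split; first exact/eqP.
  by apply/allP => l _; apply/eqP; case: (H l).
apply/allP => l _; apply/allP => i Hi; apply/eqP; case: (H l) => _; exact.
Qed.

Lemma Rrefl v : equivalent e e n v v.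
Proof. by apply: Rmk. Qed.

Lemma Rsym v x : equivalent e e n v x -> equivalent e e n x v.
Proof.
move/Rext=> [h H]; apply: Rmk; split=> // l; have [a b] := H l; split=> // i Hi.
by rewrite b.
Qed.

Lemma Rtrans v x y : equivalent e e n v x -> equivalent e e n x y -> equivalent e e n v y.
Proof.
move/Rext=> [h H] /Rext [h' H']; apply: Rmk; split; first by rewrite h.
move=> l; have [a b] := H l; have [a' b'] := H' l; split; first by rewrite a.
by move=> i Hi; rewrite b // b'.
Qed.

End Eqv.

Theorem theorem2 (V U : finType) (eV : rel V) (eU : rel U)
    (sV : seq V) (sU : seq U) :
  simple_graph eV -> simple_graph eU ->
  perm_eq sV (enum V) -> perm_eq sU (enum U) ->
  graph_iso eV eU ->
  uniqueness_tree_algorithm eV eU sV sU.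
Proof.
move=> _ _ psV psU [f [[g fK gK] hf]].
set R := equivalent eV eV #|V|.
have Rr : forall v, R v v by move=> v; exact: Rrefl.
have key : forall v u, equivalent eV eU #|V| v u = R v (g u).
  by move=> v u; rewrite -{1}(gK u) (equiv_f fK gK hf).
have main : forall rest remU,
    (forall x, count (R x) (map g remU) = count (R x) rest) ->
    foldl (compare_step eV eU) (remU, 0) rest = ([::], 0).
  elim=> [|v rest IH] remU H /=.
    case: remU H => // u s /(_ (g u)) /=; by rewrite Rr.
  rewrite (eq_filter (key v)).
  case E: [seq u <- remU | R v (g u)] => [|u s].
    have := H v; rewrite /= Rr count_map -size_filter.
    by rewrite [X in size X](_ : _ = [::]) //.
  have : u \in [seq u <- remU | R v (g u)] by rewrite E mem_head.
  rewrite mem_filter => /andP [Ru Hu].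
  apply: IH => x; move: (H x); rewrite !count_map count_rem Hu /= => ->.
  have -> : R x (g u) = R x v.
    apply/idP/idP => Hx.
      exact: Rtrans Hx (Rsym Ru).
    exact: Rtrans Hx Ru.
  by case: (R x v) => /=; rewrite ?subn0 // addnC addnK.
have Hp : perm_eq (map g (enum U)) (enum V).
  apply: uniq_perm.
  - by rewrite (map_inj_uniq (can_inj gK)) enum_uniq.
  - exact: enum_uniq.
  move=> y; rewrite mem_enum; apply/mapP; exists (f y); by rewrite ?mem_enum.
rewrite /uniqueness_tree_algorithm main // => x.
by rewrite (permP (perm_map g psU)) (permP psV) (permP Hp).
Qed.
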